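(* Let $G$ be a locally compact group with a compact open subgroup $H$, and let $f:G\to\mathbb C$. Then $f\in\mathcal P(G)$ if and only if there are finitely many functions $f_i,g_i,f'_j,g'_j\in C_0(G)$ such that for all $x,y\in G$: (i) $f(xy)\chi_H(y)=\sum_{i=1}^m f_i(x)g_i(y)$, and (ii) $f(y)\chi_H(xy)=\sum_{j=1}^n f'_j(x)g'_j(y)$.
   Context: $\chi_H$ is the characteristic function of $H$; $C_0(G)$ denotes continuous complex functions vanishing at infinity. $\mathcal P(G)$ is the set of $f\in C_c(G)$ such that for some compact open subgroup $K$ of $G$ there exist finitely many $f_i\in C_c(G)$ and $\phi_i\in C(K)$ with $f(xk)=\sum_i f_i(x)\phi_i(k)$ for all $x\in G,k\in K$. *)

(* Defs.v *)
From HB Require Import structures.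
From mathcomp Require Import all_boot all_order all_algebra.
From mathcomp Require Import complex.
From mathcomp Require Import all_classical all_reals all_analysis.
Import numFieldNormedType.Exports.
Set Implicit Arguments. Unset Strict Implicit. Unset Printing Implicit Defensive.
Import Order.TTheory GRing.Theory Num.Theory.
Local Open Scope classical_set_scope.
Local Open Scope ring_scope.

Definition CC (R : realType) : numClosedFieldType := R[i].

Definition is_lc_group (T : topologicalType) (mul : T -> T -> T) (inv : T -> T)
    (e : T) : Prop :=
  [/\ (forall x y z, mul x (mul y z) = mul (mul x y) z),
      (forall x, mul e x = x /\ mul x e = x),
      (forall x, mul (inv x) x = e /\ mul x (inv x) = e),
      continuous (fun p : T * T => mul p.1 p.2) /\ continuous inv &
      hausdorff_space T /\ locally_compact [set: T]].

Definition compact_open_subgroup (T : topologicalType) (mul : T -> T -> T)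
    (inv : T -> T) (e : T) (H : set T) : Prop :=
  [/\ H e, (forall x y, H x -> H y -> H (mul x y)), (forall x, H x -> H (inv x)),
      compact H & open H].

Definition Cc (R : realType) (T : topologicalType) (f : T -> CC R) : Prop :=
  continuous f /\ compact (closure [set x | f x != 0]).

Definition C0 (R : realType) (T : topologicalType) (f : T -> CC R) : Prop :=
  continuous f /\
  forall eps : R, 0 < eps ->
    exists K : set T, compact K /\ forall x, ~ K x -> `|f x| < (eps%:C)%C.

Definition in_P (R : realType) (T : topologicalType) (mul : T -> T -> T)
    (inv : T -> T) (e : T) (f : T -> CC R) : Prop :=
  Cc f /\
  exists K : set T, compact_open_subgroup mul inv e K /\
  exists (n : nat) (fi : 'I_n -> T -> CC R) (phi : 'I_n -> T -> CC R),
    (forall i, Cc (fi i)) /\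
    (forall i, {within K, continuous (phi i)}) /\
    (forall x k, K k -> f (mul x k) = \sum_(i < n) fi i x * phi i k).

(* Main.v *)
Require Import Defs.
From HB Require Import structures.
From mathcomp Require Import all_boot all_order all_algebra.
From mathcomp Require Import complex.
From mathcomp Require Import all_classical all_reals all_analysis.
From mathcomp Require Import finmap.
Import numFieldNormedType.Exports.
Import Order.TTheory GRing.Theory Num.Theory.
Local Open Scope classical_set_scope.
Local Open Scope ring_scope.

Definition ptd {T : topologicalType} (x0 : T) : Type := T.
HB.instance Definition _ (T : topologicalType) (x0 : T) := Topological.copy (ptd x0) T.
HB.instance Definition _ (T : topologicalType) (x0 : T) := isPointed.Build (ptd x0) x0.

Lemma fin_cover (T : topologicalType) (x0 : T) (A : set T) (f : T -> set T) :
  compact A -> (forall i, open (f i)) -> (forall y, A y -> f y y) ->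
  exists D' : seq T, {subset D' <= A} /\
     forall y, A y -> exists2 i, i \in D' & f i y.
Proof.
move=> cA fo fy.
have cc : @cover_compact (ptd x0) A by rewrite -compact_cover.
case: (cc T A f).
- by move=> i _; apply: fo.
- by move=> y Ay; exists y => //; apply: fy.
move=> D' sD' AD'; exists (enum_fset D'); split.
  by move=> i iD; apply: sD'.
by move=> y /AD' [i iD fi]; exists i.
Qed.

Section Grp.
Variables (R : realType) (T : topologicalType) (mul : T -> T -> T) (inv : T -> T) (e : T).
Hypothesis G : is_lc_group mul inv e.

Lemma mulA x y z : mul x (mul y z) = mul (mul x y) z.
Proof. by case: G. Qed.
Lemma mul1g x : mul e x = x.
Proof. by case: G => _ /(_ x) []. Qed.
Lemma mulg1 x : mul x e = x.
Proof. by case: G => _ /(_ x) []. Qed.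
Lemma mulVg x : mul (inv x) x = e.
Proof. by case: G => _ _ /(_ x) []. Qed.
Lemma mulgV x : mul x (inv x) = e.
Proof. by case: G => _ _ /(_ x) []. Qed.
Lemma mulKg a b : mul (inv a) (mul a b) = b.
Proof. by rewrite mulA mulVg mul1g. Qed.
Lemma mulKVg a b : mul a (mul (inv a) b) = b.
Proof. by rewrite mulA mulgV mul1g. Qed.
Lemma mulgK a b : mul (mul b a) (inv a) = b.
Proof. by rewrite -mulA mulgV mulg1. Qed.
Lemma mulgKV a b : mul (mul b (inv a)) a = b.
Proof. by rewrite -mulA mulVg mulg1. Qed.
Lemma invK a : inv (inv a) = a.
Proof. by rewrite -[LHS]mulg1 -(mulVg a) mulKg. Qed.
Lemma invM a b : inv (mul a b) = mul (inv b) (inv a).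
Proof.
have h : mul (mul a b) (mul (inv b) (inv a)) = e by rewrite -mulA mulKVg mulgV.
by rewrite -[LHS]mulg1 -h mulKg.
Qed.

Lemma mul_cont : continuous (fun p : T * T => mul p.1 p.2).
Proof. by case: G => _ _ _ []. Qed.
Lemma inv_cont : continuous inv.
Proof. by case: G => _ _ _ []. Qed.
Lemma mull_cont a : continuous (mul a).
Proof.
move=> x; apply: (@continuous_comp _ _ _ (fun y => (a, y)) (fun p : T * T => mul p.1 p.2)).
  by apply: cvg_pair => /=; [exact: cvg_cst|exact: cvg_id].
exact: mul_cont.
Qed.
Lemma mulr_cont a : continuous (fun x => mul x a).
Proof.
move=> x; apply: (@continuous_comp _ _ _ (fun y => (y, a)) (fun p : T * T => mul p.1 p.2)).
  by apply: cvg_pair => /=; [exact: cvg_id|exact: cvg_cst].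
exact: mul_cont.
Qed.

Definition subgrp (S : set T) := [/\ S e, (forall x y, S x -> S y -> S (mul x y)),
  (forall x, S x -> S (inv x)) & open S].

Definition coset (S : set T) a := [set x | S (mul (inv a) x)].

Lemma coset_open S a : subgrp S -> open (coset S a).
Proof.
case=> _ _ _ oS; have := mull_cont (inv a).
by move/continuousP => /(_ _ oS).
Qed.

Lemma coset_self S a : subgrp S -> coset S a a.
Proof. by case=> S1 _ _ _; rewrite /coset /= mulVg. Qed.

Lemma coset_sym S a b : subgrp S -> coset S a b -> coset S b a.
Proof. by case=> _ _ Si _ /Si; rewrite /coset /= invM invK. Qed.

Lemma coset_trans S a b c : subgrp S -> coset S a b -> coset S b c -> coset S a c.
Proof.
case=> _ Sm _ _ ab bc; have := Sm _ _ ab bc.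
by rewrite /coset /= -mulA mulKVg.
Qed.

Arguments coset_sym {S a b}.
Arguments coset_self {S} a.
Arguments coset_trans {S a b c}.

Lemma coset_closed S a : subgrp S -> closed (coset S a).
Proof.
move=> sS; rewrite -[coset S a]setCK closedC openE => x /= nx.
apply: (@filterS _ _ _ (coset S x)).
  by move=> y xy ay; apply: nx; apply: coset_trans sS ay (coset_sym sS xy).
apply: open_nbhs_nbhs; split; [exact: coset_open|exact: coset_self].
Qed.


Lemma cont_sum (I : Type) (s : seq I) (F : I -> T -> CC R) x :
  (forall i, F i @ x --> F i x) ->
  (fun y => \sum_(i <- s) F i y) @ x --> \sum_(i <- s) F i x.
Proof.
move=> Fc; elim: s => [|i s IH].
  have -> : (fun y => \sum_(i <- [::]) F i y) = fun _ => 0.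
    by apply: funext => y; rewrite big_nil.
  rewrite big_nil; exact: cvg_cst.
have -> : (fun y => \sum_(j <- i :: s) F j y) = (F i \+ fun y => \sum_(j <- s) F j y).
  by apply: funext => y; rewrite big_cons.
rewrite big_cons; exact: (@cvgD (CC R) (CC R) _ _ _ _ _ _ _ (Fc i) IH).
Qed.

Lemma ind_cont (A : set T) (g : T -> CC R) :
  open A -> closed A -> (forall x, A x -> g @ x --> g x) ->
  continuous (fun x => \1_A x * g x).
Proof.
move=> oA cA gc x; have [Ax|nAx] := pselect (A x).
  rewrite /continuous_at /= indicE mem_set // mul1r.
  apply: cvg_trans (gc x Ax).
  apply: near_eq_cvg; have : nbhs x A by apply: open_nbhs_nbhs.
  by apply: filterS => y Ay; rewrite indicE mem_set // mul1r.
rewrite /continuous_at /= indicE memNset // mul0r.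
have : nbhs x (~` A).
  apply: open_nbhs_nbhs; split; last exact: nAx.
  by rewrite -closedC setCK.
move=> nA; apply: cvg_trans (cvg_cst (0 : CC R)).
apply: near_eq_cvg; apply: filterS nA => y nAy.
by rewrite indicE memNset // mul0r.
exact: _.
Qed.

Lemma C0_of (g : T -> CC R) (K : set T) :
  continuous g -> compact K -> (forall x, ~ K x -> g x = 0) -> C0 g.
Proof.
move=> gc cK gK; split => // eps eps0; exists K; split => // x /gK ->.
by rewrite normr0 ltcR.
Qed.

Definition rep (S : set T) a := xget e (coset S a).

Lemma rep_coset S a : subgrp S -> coset S a (rep S a).
Proof. by move=> sS; apply: xgetI (coset_self a sS). Qed.

Arguments rep_coset {S} a.

Lemma rep_eq S a b : subgrp S -> coset S a b -> rep S a = rep S b.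
Proof.
move=> sS ab; rewrite /rep; congr xget; apply/seteqP; split => x.
  by move=> ax; apply: coset_trans sS (coset_sym sS ab) ax.
by move=> bx; apply: coset_trans sS ab bx.
Qed.

Arguments rep_eq {S a b}.

Lemma rep_inj S a b : subgrp S -> rep S a = rep S b -> coset S a b.
Proof.
move=> sS eab; have ha := rep_coset a sS; have hb := rep_coset b sS.
rewrite eab in ha; exact: coset_trans sS ha (coset_sym sS hb).
Qed.

Arguments rep_inj {S a b}.

Lemma rep_rep S a : subgrp S -> rep S (rep S a) = rep S a.
Proof. by move=> sS; symmetry; apply: rep_eq sS (rep_coset a sS). Qed.

Lemma cover_cosets S (A : set T) : subgrp S -> compact A ->
  exists hs : seq T, [/\ uniq (map (rep S) hs),
    (forall h, h \in hs -> exists2 a, A a & coset S a h) &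
    (forall y, A y -> exists2 h, h \in hs & coset S h y)].
Proof.
move=> sS cA; case: (@fin_cover T e A (coset S) cA (fun i => coset_open S i sS) (fun i _ => coset_self i sS)).
move=> D' [sD' AD'].
pose hs := undup (map (rep S) D').
have mrep : map (rep S) hs = hs.
  rewrite -[RHS]map_id; apply/eq_in_map => h; rewrite mem_undup.
  by case/mapP => a _ ->; rewrite rep_rep.
exists hs; split.
- by rewrite mrep undup_uniq.
- move=> h; rewrite mem_undup => /mapP [a aD ->]; exists a.
    apply: set_mem; exact: sD'.
  exact: rep_coset.
- move=> y /AD' [a aD ay]; exists (rep S a).
    by rewrite mem_undup; apply: map_f.
  exact: coset_trans sS (coset_sym sS (rep_coset a sS)) ay.
Qed.

Lemma sum_fin (I : finType) (u v : I -> T -> CC R) (F : T -> T -> CC R)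
    (P : (T -> CC R) -> Prop) :
  (forall a, P (u a) /\ P (v a)) ->
  (forall x y, F x y = \sum_(a : I) u a x * v a y) ->
  exists m (fi gi : 'I_m -> T -> CC R), (forall i, P (fi i) /\ P (gi i)) /\
    forall x y, F x y = \sum_(i < m) fi i x * gi i y.
Proof.
move=> uv Fe; exists #|(predT : {pred I})|, (fun i => u (enum_val i)), (fun i => v (enum_val i)).
split => // x y; rewrite Fe -(big_enum_val (fun a => u a x * v a y)).
by apply: eq_bigl => a; rewrite inE.
Qed.

Lemma cvgMx (f g : T -> CC R) x : f @ x --> f x -> g @ x --> g x ->
  (fun y => f y * g y) @ x --> f x * g x.
Proof. by move=> hf hg; exact: (@cvgM (CC R) T (nbhs x) _ f g _ _ hf hg). Qed.

Lemma uniq_map_inj (U : eqType) (f : T -> U) (s : seq T) x y :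
  uniq (map f s) -> x \in s -> y \in s -> f x = f y -> x = y.
Proof.
elim: s => // a s IH /= /andP [fa us]; rewrite !inE.
case/orP => [/eqP ->|xs]; case/orP => [/eqP ->|ys] //.
- by move=> eq; move: fa; rewrite eq map_f.
- by move=> eq; move: fa; rewrite -eq map_f.
- exact: IH.
Qed.

Arguments uniq_map_inj {U f s x y}.

Lemma sum_coset S hs (F : T -> CC R) y h : subgrp S -> uniq (map (rep S) hs) ->
  h \in hs -> coset S h y -> \sum_(h' <- hs) \1_(coset S h') y * F h' = F h.
Proof.
move=> sS us hin hy.
have uhs : uniq hs by move: us; apply: map_uniq.
rewrite (bigD1_seq h) //= indicE mem_set // mul1r big_seq_cond big1 ?addr0 //.
move=> h' /andP [h'in nh].
rewrite indicE; case: (boolP (y \in coset S h')); last by rewrite mul0r.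
move=> /set_mem h'y; exfalso; move/negP: nh; apply; apply/eqP.
apply: (uniq_map_inj us h'in hin).
apply: (rep_eq sS); exact: (coset_trans sS h'y (coset_sym sS hy)).
Qed.

Lemma sum_coset0 S hs (F : T -> CC R) y :
  (forall h, h \in hs -> ~ coset S h y) -> \sum_(h' <- hs) \1_(coset S h') y * F h' = 0.
Proof.
move=> nh; rewrite big_seq big1 // => h hin.
by rewrite indicE memNset ?mul0r //; apply: nh.
Qed.

Lemma coset_image S h : coset S h = mul h @` S.
Proof.
apply/seteqP; split => x.
  by move=> hx; exists (mul (inv h) x) => //; rewrite mulKVg.
by case=> z Sz <-; rewrite /coset /= mulKg.
Qed.

Lemma compact_coset S h : compact S -> compact (coset S h).
Proof.
move=> cS; rewrite coset_image; apply: continuous_compact => //.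
by apply: continuous_subspaceT; exact: mull_cont.
Qed.

Lemma coset_sub S h y : subgrp S -> S h -> coset S h y -> S y.
Proof. by case=> _ Sm _ _ Sh hy; rewrite -(mulKVg h y); apply: Sm. Qed.

Lemma cos_subgrp H : compact_open_subgroup mul inv e H -> subgrp H.
Proof. by case. Qed.

Arguments cos_subgrp {H}.

Lemma bound H (f : T -> CC R) n (fj' gj' : 'I_n -> T -> CC R) : subgrp H ->
  (forall x y, f y * \1_H (mul x y) = \sum_(j < n) fj' j x * gj' j y) ->
  forall ys, uniq (map (rep H) ys) -> (forall y, y \in ys -> f y != 0) ->
  (size ys <= n)%N.
Proof.
move=> sH eq2 ys uys nz; rewrite leqNgt; apply/negP => lt.
pose k := size ys; pose y (t : 'I_k) := nth e ys t.
pose A := \matrix_(t < k, j < n) gj' j (y t).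
have nrf : ~~ row_free A.
  apply/negP => /eqP rk; move: (rank_leq_col A); rewrite rk leqNgt.
  by rewrite lt.
have : kermx A != 0 by rewrite kermx_eq0.
case/rowV0Pn => v vk vnz.
have vA : v *m A = 0 by apply/sub_kermxP.
have v0 : forall s, v 0 s = 0.
  move=> s.
  have key : \sum_(t < k) v 0 t * (f (y t) * \1_H (mul (inv (y s)) (y t))) = 0.
    transitivity (\sum_(j < n) fj' j (inv (y s)) * (v *m A) 0 j); last first.
      by rewrite vA big1 // => j _; rewrite mxE mulr0.
    under eq_bigr do rewrite eq2 mulr_sumr.
    rewrite exchange_big /=; apply: eq_bigr => j _.
    rewrite !mxE mulr_sumr; apply: eq_bigr => t _; rewrite mxE.
    by rewrite mulrCA.
  rewrite (bigD1 s) //= big1 ?addr0 in key; last first.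
    move=> t nts; rewrite indicE; case: (boolP (_ \in H)); last by rewrite !mulr0.
    move=> /set_mem Hst; exfalso; move/negP: nts; apply.
    have := rep_eq sH (Hst : coset H (y s) (y t)) => eqr.
    have ts : (t < size ys)%N by [].
    have ss : (s < size ys)%N by [].
    apply/eqP/val_inj/eqP => /=.
    rewrite -(@nth_uniq _ e (map (rep H) ys)) ?size_map //.
    by rewrite !(nth_map e) //; apply/eqP; symmetry; exact: eqr.
  move: key; rewrite mulVg indicE mem_set; last by case: sH.
  rewrite mulr1 => /eqP; rewrite mulf_eq0 => /orP [/eqP //|fz].
  by have := nz (y s) (mem_nth e (ltn_ord s)); rewrite fz.
have : v = 0 by apply/matrixP => i j; rewrite mxE (ord1 i) v0.
by move/eqP: vnz.
Qed.

Arguments bound {H f n fj' gj'}.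

Lemma max_list H (f : T -> CC R) n (fj' gj' : 'I_n -> T -> CC R) : subgrp H ->
  (forall x y, f y * \1_H (mul x y) = \sum_(j < n) fj' j x * gj' j y) ->
  exists ys : seq T, forall y, f y != 0 -> exists2 h, h \in ys & coset H h y.
Proof.
move=> sH e2; apply: contrapT => nE.
have ext : forall ys : seq T, exists y, f y != 0 /\ forall h, h \in ys -> ~ coset H h y.
  move=> ys; apply: contrapT => nex; apply: nE; exists ys => y fy.
  apply: contrapT => nh; apply: nex; exists y; split => // h hin ch; apply: nh.
  by exists h.
have all : forall k, exists ys, [/\ size ys = k, uniq (map (rep H) ys) &
    forall y, y \in ys -> f y != 0].
  elim => [|k [ys [sz u nz]]]; first by exists [::].
  have [y [fy nh]] := ext ys.
  exists (y :: ys); split => /=; first by rewrite sz.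
  - rewrite u andbT; apply/mapP => [[h hin eqr]]; apply: (nh h hin).
    exact: (coset_sym sH (rep_inj sH eqr)).
  - move=> z; rewrite inE => /orP [/eqP -> //|]; exact: nz.
have [ys [sz u nz]] := all n.+1.
by have := bound sH e2 ys u nz; rewrite sz ltnn.
Qed.

Arguments max_list {H f n fj' gj'}.

Definition ucos S (ys : seq T) := [set x | exists2 h, h \in ys & coset S h x].

Lemma ucos_open S ys : subgrp S -> open (ucos S ys).
Proof.
move=> sS; rewrite openE => x [h hin hx].
apply: (@filterS _ _ _ (coset S x)).
  by move=> z xz; exists h => //; exact: coset_trans sS hx xz.
by apply: open_nbhs_nbhs; split; [exact: coset_open|exact: coset_self].
Qed.

Lemma ucos_closed S ys : subgrp S -> closed (ucos S ys).
Proof.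
move=> sS; rewrite -[ucos S ys]setCK closedC openE => x /= nx.
apply: (@filterS _ _ _ (coset S x)).
  move=> z xz [h hin hz]; apply: nx; exists h => //.
  exact: coset_trans sS hz (coset_sym sS xz).
by apply: open_nbhs_nbhs; split; [exact: coset_open|exact: coset_self].
Qed.

Lemma ucos_compact S ys : compact S -> compact (ucos S ys).
Proof.
move=> cS; have -> : ucos S ys = \big[setU/set0]_(h <- ys) coset S h.
  elim: ys => [|a ys IH]; rewrite ?big_nil ?big_cons.
    by apply/seteqP; split => x // [].
  rewrite -IH; apply/seteqP; split => x.
    case=> h; rewrite inE => /orP [/eqP -> ax|hin hx]; [by left|right].
    by exists h.
  case=> [ax|[h hin hx]]; first by exists a => //; rewrite inE eqxx.
  by exists h => //; rewrite inE hin orbT.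
by apply: bigsetU_compact => i _; exact: compact_coset.
Qed.

Lemma back H (f : T -> CC R) m n (fi gi : 'I_m -> T -> CC R)
    (fj' gj' : 'I_n -> T -> CC R) :
  compact_open_subgroup mul inv e H ->
  (forall i, C0 (fi i) /\ C0 (gi i)) ->
  (forall j, C0 (fj' j) /\ C0 (gj' j)) ->
  (forall x y, f (mul x y) * \1_H y = \sum_(i < m) fi i x * gi i y) ->
  (forall x y, f y * \1_H (mul x y) = \sum_(j < n) fj' j x * gj' j y) ->
  in_P mul inv e f.
Proof.
move=> hH C0i C0j e1 e2.
have sH := cos_subgrp hH; have cH : compact H by case: hH.
have He : H e by case: hH.
have fE : f = fun x => \sum_(i < m) fi i x * gi i e.
  by apply: funext => x; rewrite -e1 mulg1 indicE mem_set // mulr1.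
have fc : continuous f.
  rewrite fE => x; apply: cont_sum => i; apply: cvgMx.
    by case: (C0i i) => -[+ _] _; apply.
  exact: cvg_cst.
have [ys Hys] := max_list sH e2.
pose C := ucos H ys.
have oC : open C by exact: ucos_open.
have clC : closed C by exact: ucos_closed.
have cC : compact C by exact: ucos_compact.
have clsub : forall g : T -> CC R, (forall x, g x != 0 -> C x) ->
    compact (closure [set x | g x != 0]).
  move=> g gC.
  have sub : closure [set x | g x != 0] `<=` C.
    rewrite [X in _ `<=` X](proj1 (closure_id C) clC).
    by apply: closure_subset => x; apply: gC.
  have ccl : closed (closure [set x | g x != 0]) by exact: closed_closure.
  exact: (subclosed_compact ccl cC sub).
split; first by split => //; apply: clsub.
exists H; split => //.
exists m, (fun i x => \1_C x * fi i x), gi; split; [|split].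
- move=> i; split.
    apply: ind_cont => // x _.
    by case: (C0i i) => -[+ _] _; apply.
  apply: clsub => x; rewrite indicE; case: (boolP (x \in C)).
    by move/set_mem.
  by rewrite mul0r eqxx.
- move=> i; apply: continuous_subspaceT.
  by case: (C0i i) => _ [].
- move=> x k Hk.
  have := e1 x k; rewrite indicE mem_set // mulr1 => ->.
  have [Cx|nCx] := pselect (C x).
    by apply: eq_bigr => i _; rewrite indicE mem_set // mul1r.
  rewrite [RHS]big1; last first.
    by move=> i _; rewrite indicE memNset // mul0r mul0r.
  rewrite -e1 indicE mem_set // mulr1.
  apply/eqP/negPn/negP => fxk; apply: nCx.
  have [h hin hxk] := Hys _ fxk.
  exists h => //; apply: (coset_trans sH hxk).
  by rewrite /coset /= invM -mulA mulVg mulg1; case: sH => _ _ Hi _; apply: Hi.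
Qed.

Arguments cover_cosets {S A}.
Arguments sum_fin {I u v} F {P}.
Arguments sum_coset {S hs F y h}.
Arguments sum_coset0 {S hs F y}.

Lemma forw H (f : T -> CC R) :
  compact_open_subgroup mul inv e H -> in_P mul inv e f ->
  exists (m n : nat) (fi gi : 'I_m -> T -> CC R) (fj' gj' : 'I_n -> T -> CC R),
    [/\ (forall i, C0 (fi i) /\ C0 (gi i)),
        (forall j, C0 (fj' j) /\ C0 (gj' j)),
        (forall x y, f (mul x y) * \1_H y = \sum_(i < m) fi i x * gi i y) &
        (forall x y, f y * \1_H (mul x y) = \sum_(j < n) fj' j x * gj' j y)].
Proof.
move=> hH [[fc cf] [K [hK [nn [fi [phi [fic [phic feq]]]]]]]].
have sH := cos_subgrp hH; have cH : compact H by case: hH.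
have sK := cos_subgrp hK; have oK : open K by case: hK.
pose L := [set x | K x /\ H x].
have sL : subgrp L.
  case: sK => K1 Km Ki _; case: sH => H1 Hm Hi _.
  split.
  - by split.
  - by move=> x y [? ?] [? ?]; split; [apply: Km|apply: Hm].
  - by move=> x [? ?]; split; [apply: Ki|apply: Hi].
  - by apply: openI => //; case: hH.
have Hmul : forall x y, H x -> H y -> H (mul x y) by case: sH.
have Hinv : forall x, H x -> H (inv x) by case: sH.
have [hs [uhs hsH hcov]] := cover_cosets sL cH.
have hsH' : forall h, h \in hs -> H h.
  move=> h /hsH [a Ha [_ Hah]].
  by rewrite -(mulKVg a h); apply: Hmul.
have E1 : forall x y, f (mul x y) * \1_H y =
    \sum_(h <- hs) \1_(coset L h) y *
       (\sum_(i < nn) fi i (mul x h) * phi i (mul (inv h) y)).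
  move=> x y; have [Hy|nHy] := pselect (H y).
    have [h hin hy] := hcov y Hy.
    rewrite (sum_coset sL uhs hin hy) indicE mem_set // mulr1.
    rewrite -feq; last by case: hy.
    by rewrite -mulA mulKVg.
  rewrite sum_coset0 ?indicE ?memNset ?mulr0 // => h hin [_ Hhy].
  by apply: nHy; rewrite -(mulKVg h y); apply: Hmul => //; apply: hsH'.
pose I1 := ('I_(size hs) * 'I_nn)%type.
pose u1 (p : I1) := fun x => fi p.2 (mul x (nth e hs p.1)).
pose v1 (p : I1) := fun y => \1_(coset L (nth e hs p.1)) y *
   phi p.2 (mul (inv (nth e hs p.1)) y).
have E1' : forall x y, f (mul x y) * \1_H y = \sum_(p : I1) u1 p x * v1 p y.
  move=> x y; rewrite E1 (big_nth e) big_mkord.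
  under eq_bigr do rewrite mulr_sumr.
  rewrite pair_big /=; apply: eq_big => // p _.
  by rewrite /u1 /v1 mulrCA.
have C01 : forall p, C0 (u1 p) /\ C0 (v1 p).
  move=> [s i]; set h := nth e hs s; split.
  - have fic' : continuous (fi i) by case: (fic i).
    apply: (@C0_of _ ((fun z => mul z (inv h)) @` closure [set z | fi i z != 0])).
    + move=> x; exact: (continuous_comp (mulr_cont h x) (fic' (mul x h))).
    + apply: continuous_compact; last by case: (fic i).
      by apply: continuous_subspaceT; exact: mulr_cont.
    + move=> x nx; apply/eqP/negPn/negP => fx; apply: nx.
      exists (mul x h); last by rewrite mulgK.
      by apply: subset_closure.
  - apply: (@C0_of _ H).
    + apply: ind_cont; [exact: coset_open|exact: coset_closed|].
      move=> y [Ky _].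
      have := phic i; rewrite continuous_open_subspace // => phic'.
      exact: (continuous_comp (mull_cont (inv h) y) (phic' _ (mem_set Ky))).
    + exact: cH.
    + move=> y nHy; rewrite /v1 /= indicE memNset ?mul0r // => -[_ Hhy].
      apply: nHy; rewrite -(mulKVg h y); apply: Hmul => //; apply: hsH'.
      by rewrite mem_nth.
have [m [fi1 [gi1 [C0i E1f]]]] := sum_fin (fun x y => f (mul x y) * \1_H y) C01 E1'.
pose S := closure [set x | f x != 0].
have [ys [uys _ ycov]] := cover_cosets sH cf.
have E2 : forall x y, f y * \1_H (mul x y) =
    \sum_(h <- ys) \1_(coset H h) y * (\1_H (mul x h) * f y).
  move=> x y; have [fy0|fy] := eqVneq (f y) 0.
    rewrite fy0 mul0r; symmetry; by apply: big1 => h _; rewrite !mulr0.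
  have [h hin hy] := ycov y (@subset_closure _ [set x | f x != 0] y fy).
  rewrite (sum_coset sH uys hin hy).
  have eqH : (mul x y \in H) = (mul x h \in H).
    have xy : mul x y = mul (mul x h) (mul (inv h) y) by rewrite mulA mulgK.
    apply/idP/idP => /set_mem Hx; apply/mem_set.
      rewrite -(mulgK (mul (inv h) y) (mul x h)) -xy.
      by apply: Hmul => //; apply: Hinv.
    by rewrite xy; apply: Hmul.
  by rewrite !indicE eqH mulrC.
pose u2 (s : 'I_(size ys)) := fun x => (\1_H (mul x (nth e ys s)) : CC R).
pose v2 (s : 'I_(size ys)) := fun y => \1_(coset H (nth e ys s)) y * f y.
have E2' : forall x y, f y * \1_H (mul x y) = \sum_(s < size ys) u2 s x * v2 s y.
  move=> x y; rewrite E2 (big_nth e) big_mkord.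
  by apply: eq_bigr => s _; rewrite /u2 /v2 mulrCA.
have Hcl : closed H by apply: compact_closed => //; case: G => _ _ _ _ [].
have C02 : forall s, C0 (u2 s) /\ C0 (v2 s).
  move=> s; set h := nth e ys s; split.
  - apply: (@C0_of _ ((fun z => mul z (inv h)) @` H)).
    + have -> : u2 s = fun x => \1_((fun z => mul z h) @^-1` H) x * 1.
        by apply: funext => x; rewrite mulr1.
      apply: ind_cont.
      * by move: (mulr_cont h) => /continuousP; apply; case: hH.
      * apply: preimage_closed => // x _; exact: mulr_cont.
      * by move=> x _; exact: cvg_cst.
    + apply: continuous_compact => //.
      by apply: continuous_subspaceT; exact: mulr_cont.
    + move=> x nx; rewrite /u2 indicE memNset // => Hxh; apply: nx.
      by exists (mul x h); last by rewrite mulgK.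
  - apply: (@C0_of _ (coset H h)).
    + by apply: ind_cont; [exact: coset_open|exact: coset_closed|move=> y _; exact: fc].
    + exact: compact_coset.
    + by move=> y ny; rewrite /v2 indicE memNset ?mul0r.
have [n [fj [gj [C0j E2f]]]] := sum_fin (fun x y => f y * \1_H (mul x y)) C02 E2'.
by exists m, n, fi1, gi1, fj, gj; split.
Qed.

End Grp.

Theorem proposition3p9 (R : realType) (T : topologicalType)
    (mul : T -> T -> T) (inv : T -> T) (e : T) (H : set T) (f : T -> CC R) :
  is_lc_group mul inv e ->
  compact_open_subgroup mul inv e H ->
  in_P mul inv e f <->
  exists (m n : nat) (fi gi : 'I_m -> T -> CC R) (fj' gj' : 'I_n -> T -> CC R),
    [/\ (forall i, C0 (fi i) /\ C0 (gi i)),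
        (forall j, C0 (fj' j) /\ C0 (gj' j)),
        (forall x y, f (mul x y) * \1_H y = \sum_(i < m) fi i x * gi i y) &
        (forall x y, f y * \1_H (mul x y) = \sum_(j < n) fj' j x * gj' j y)].
Proof.
move=> G hH; split; first exact: forw.
case=> m [n [fi [gi [fj [gj [C0i C0j e1 e2]]]]]].
exact: (@back R T mul inv e G H f m n fi gi fj gj hH C0i C0j e1 e2).
Qed.
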